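(* Let $S$ be a semidomain. The following are equivalent: (a) $S$ is an FFS; (b) $S[x]$ is an FFS; (c) $S[x^{\pm1}]$ is an FFS.
   Context: A semidomain is a subset $S$ of an integral domain $R$ containing $0$ and $1$ and closed under addition and multiplication; $S^*=S\setminus\{0\}$ is a monoid under multiplication, with units forming $S^\times$; $b,c\in S^*$ are associates if each divides the other in $S^*$. An atom is a nonunit $a\in S^*$ such that $a=bc$ with $b,c\in S^*$ forces $b$ or $c$ to be a unit; $S$ is atomic if every nonunit of $S^*$ is a finite product of atoms. $S$ is a finite factorization semidomain (FFS) if $S$ is atomic and every element of $S^*$ has only finitely many factorizations into atoms, where factorizations are considered up to order and associates of the atoms (equivalently, every element of $S^*$ has only finitely many divisors in $S^*$ up to associates). $S[x]$ (resp. $S[x^{\pm1}]$) is the semidomain of polynomials (resp. Laurent polynomials) in $R[x]$ (resp. $R[x^{\pm1}]$) with coefficients in $S$. *)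

(* Defs.v *)
From HB Require Import structures.
From mathcomp Require Import all_boot all_order all_algebra fraction.
From Stdlib Require List Permutation.
Set Implicit Arguments. Unset Strict Implicit. Unset Printing Implicit Defensive.
Import Order.TTheory GRing.Theory Num.Theory.
Local Open Scope ring_scope.

Definition semidomain (R : idomainType) (S : R -> Prop) : Prop :=
  S 0 /\ S 1 /\ (forall a b, S a -> S b -> S (a + b)) /\
  (forall a b, S a -> S b -> S (a * b)).

Section Factorization.
Variables (D : comNzRingType) (S : D -> Prop).

Definition snz (x : D) : Prop := S x /\ x <> 0.

Definition sdvd (b c : D) : Prop := exists d, snz d /\ c = b * d.

Definition sunit (u : D) : Prop := snz u /\ exists v, snz v /\ u * v = 1.

Definition sassoc (b c : D) : Prop := snz b /\ snz c /\ sdvd b c /\ sdvd c b.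

Definition satom (a : D) : Prop :=
  snz a /\ ~ sunit a /\
  forall b c, snz b -> snz c -> a = b * c -> sunit b \/ sunit c.

Definition satomic : Prop :=
  forall x, snz x -> ~ sunit x ->
    exists s : seq D, List.Forall satom s /\ x = \prod_(a <- s) a.

Definition sfactorization (x : D) (s : seq D) : Prop :=
  List.Forall satom s /\ \prod_(a <- s) a = x.

Definition fact_equiv (s t : seq D) : Prop :=
  exists t', Permutation.Permutation t t' /\ List.Forall2 sassoc s t'.

Definition FFS : Prop :=
  satomic /\
  forall x, snz x ->
    exists L : seq (seq D),
      forall s, sfactorization x s -> exists t, List.In t L /\ fact_equiv s t.
End Factorization.

Definition polyS (R : idomainType) (S : R -> Prop) : {poly R} -> Prop :=
  fun p => forall i, S p`_i.

(* S[x^{+-1}]: Laurent polynomials with coefficients in S, realised inside the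
   fraction field of R[x] as the elements p / x^n with p in S[x]. *)
Definition laurentS (R : idomainType) (S : R -> Prop) : {fraction {poly R}} -> Prop :=
  fun f => exists (p : {poly R}) (n : nat), polyS S p /\ f = tofrac p / tofrac ('X^n).

(* Main.v *)
Require Import Defs.
From HB Require Import structures.
From mathcomp Require Import all_boot all_order all_algebra fraction zify ring.
From Stdlib Require Import Classical ClassicalDescription.
From Stdlib Require List Permutation.
Set Implicit Arguments. Unset Strict Implicit. Unset Printing Implicit Defensive.
Import Order.TTheory GRing.Theory Num.Theory.
Local Open Scope ring_scope.

Definition pb (P : Prop) : bool := if excluded_middle_informative P then true else false.
Lemma pbP P : reflect P (pb P).
Proof. rewrite /pb; case: excluded_middle_informative => h; by constructor. Qed.

Lemma mem_In (T : eqType) (x : T) (s : seq T) : x \in s -> List.In x s.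
Proof. elim: s => //= a s IH; rewrite in_cons => /orP [/eqP->|/IH]; auto. Qed.

Lemma Perm_perm (T : eqType) (s t : seq T) : Permutation.Permutation s t -> perm_eq s t.
Proof.
elim => //=.
- by move=> x l l' _ h; rewrite perm_cons.
- by move=> x y l; apply/permPl; exact: (perm_catCA [:: y] [:: x] l).
- by move=> l l' l'' _ h1 _ h2; exact: perm_trans h1 h2.
Qed.

Lemma count_lt (T : Type) (p q : pred T) (s : seq T) :
  (forall x, p x -> q x) -> has (predD q p) s -> (count p s < count q s)%N.
Proof.
move=> pq; elim: s => //= x s IH /orP [/andP [npx qx]|hs].
  rewrite (negbTE npx) qx /=; have := sub_count pq s; lia.
have := IH hs; case px: (p x); first by rewrite (pq _ px); lia.
case: (q x) => /=; lia.
Qed.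

Section Gen.
Variables (D : idomainType) (S : D -> Prop).
Hypothesis S1 : S 1.
Hypothesis Smul : forall a b, S a -> S b -> S (a * b).

Local Notation snz := (snz S).
Local Notation sdvd := (Defs.sdvd S).
Local Notation sassoc := (sassoc S).
Local Notation sunit := (sunit S).
Local Notation satom := (satom S).

Lemma snz1 : snz 1.
Proof. by split=> //; apply/eqP; exact: oner_neq0. Qed.

Lemma snzM a b : snz a -> snz b -> snz (a * b).
Proof.
move=> [Sa /eqP a0] [Sb /eqP b0]; split; first exact: Smul.
by apply/eqP; rewrite mulf_neq0.
Qed.

Lemma sdvd_refl x : sdvd x x.
Proof. by exists 1; split; [exact: snz1| rewrite mulr1]. Qed.

Lemma sdvd_trans a b c : sdvd a b -> sdvd b c -> sdvd a c.
Proof.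
move=> [d [hd ->]] [e [he ->]]; exists (d * e); split; first exact: snzM.
by rewrite mulrA.
Qed.

Lemma sdvdM a b c d : sdvd a b -> sdvd c d -> sdvd (a * c) (b * d).
Proof.
move=> [u [hu ->]] [v [hv ->]]; exists (u * v); split; first exact: snzM.
by rewrite mulrACA.
Qed.

Lemma sdvd_mulr a c : snz c -> sdvd a (a * c).
Proof. by move=> hc; exists c. Qed.

Lemma sdvd_mull a c : snz c -> sdvd a (c * a).
Proof. by move=> hc; exists c; rewrite mulrC. Qed.

Lemma sassoc_refl x : snz x -> sassoc x x.
Proof. by move=> h; do 2!split=> //; split; exact: sdvd_refl. Qed.

Lemma sassoc_sym x y : sassoc x y -> sassoc y x.
Proof. by move=> [? [? [? ?]]]; do 3!split=> //. Qed.

Lemma sassoc_trans x y z : sassoc x y -> sassoc y z -> sassoc x z.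
Proof.
move=> [hx [hy [h1 h2]]] [_ [hz [h3 h4]]]; do 3!split=> //;
  by apply: sdvd_trans; eassumption.
Qed.

Lemma sassocM a b c d : sassoc a b -> sassoc c d -> sassoc (a * c) (b * d).
Proof.
move=> [ha [hb [h1 h2]]] [hc [hd [h3 h4]]]; split; first exact: snzM.
split; first exact: snzM. by split; apply: sdvdM.
Qed.

Lemma sdvd_nz a b : sdvd a b -> b <> 0 -> a <> 0.
Proof. by move=> [d [_ ->]] hb a0; apply: hb; rewrite a0 mul0r. Qed.

Lemma cancel_unit y e c : y <> 0 -> snz e -> snz c -> y = y * (e * c) -> sunit c.
Proof.
move=> y0 he hc h; split=> //; exists e; split=> //.
apply: (mulfI (x:=y)); first by apply/eqP.
by rewrite mulr1 (mulrC c) -h.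
Qed.

Lemma snz_prod s : List.Forall snz s -> snz (\prod_(a <- s) a).
Proof.
elim=> [|a s' ha _ IH]; first by rewrite big_nil; exact: snz1.
by rewrite big_cons; exact: snzM.
Qed.

Lemma atom_snz a : satom a -> snz a. Proof. by case. Qed.

Lemma Forall2_prod s t : List.Forall2 sassoc s t ->
  sassoc (\prod_(a <- s) a) (\prod_(a <- t) a).
Proof.
elim=> [|a b s' t' hab _ IH]; first by rewrite !big_nil; apply: sassoc_refl; exact: snz1.
by rewrite !big_cons; exact: sassocM.
Qed.

Fixpoint subprods (t : seq D) : seq D :=
  if t is a :: t' then subprods t' ++ map ( *%R a) (subprods t') else [:: 1].

Lemma subprodsP t : forall t1 t2, perm_eq (t1 ++ t2) t -> \prod_(a <- t1) a \in subprods t.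
Proof.
elim: t => [|a t IH] t1 t2 hp /=.
  have := perm_size hp; rewrite size_cat /= => hs.
  case: t1 hp hs => [|b t1'] _ hs; first by rewrite big_nil mem_seq1.
  by move: hs; rewrite /= addSn.
have : a \in t1 ++ t2 by rewrite (perm_mem hp) mem_head.
rewrite mem_cat => /orP [ha|ha].
  have hr := perm_to_rem ha.
  rewrite (perm_big _ hr) big_cons mem_cat; apply/orP; right; apply: map_f.
  apply: (IH _ t2); rewrite -(perm_cons a); apply: perm_trans hp.
  by rewrite -cat_cons perm_cat2r perm_sym.
have hr := perm_to_rem ha.
rewrite mem_cat; apply/orP; left; apply: (IH _ (rem a t2)).
rewrite -(perm_cons a); apply: perm_trans hp.
by rewrite (perm_catCA [:: a] t1) /= perm_cat2l perm_sym.
Qed.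

Definition divfin := forall x, snz x -> exists L : seq D,
  forall d, snz d -> sdvd d x -> exists2 l, l \in L & sassoc d l.

Lemma FFS_divfin : FFS S -> divfin.
Proof.
move=> [hat hff] x hx.
have [L0 hL0] := hff x hx.
exists (1 :: x :: flatten (map subprods L0)) => d hd [e [he hxe]].
case: (classic (sunit d)) => [[_ [v [hv hdv]]]|nud].
  exists 1; first exact: mem_head.
  split=> //; split; first exact: snz1.
  by split; [exists v; split | exists d; split=> //; rewrite mul1r].
case: (classic (sunit e)) => [[_ [v [hv hev]]]|nue].
  exists x; first by rewrite !inE eqxx orbT.
  split=> //; split=> //; split; first by exists e.
  by exists v; split=> //; rewrite hxe -mulrA hev mulr1.
have [sd [hsd ed]] := hat d hd nud.
have [se [hse ee]] := hat e he nue.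
have [t [hinL [t' [hperm hF]]]] : exists t, List.In t L0 /\ fact_equiv S (sd ++ se) t.
  apply: hL0; split; first by apply/List.Forall_app.
  by rewrite big_cat /= -ed -ee.
have [l1 [l2 [h1 [h2 E]]]] := List.Forall2_app_inv_l _ _ hF; subst t'.
exists (\prod_(a <- l1) a).
  rewrite !inE; apply/orP; right; apply/orP; right.
  apply/flatten_mapP; exists t.
    elim: L0 hinL {hL0} => //= u L IH [->|/IH h]; first exact: mem_head.
    by rewrite in_cons h orbT.
  by apply: (subprodsP (t2 := l2)); rewrite perm_sym; exact: Perm_perm.
by rewrite ed; exact: Forall2_prod.
Qed.

Section Fix.
Variable x0 : D.
Variable L : seq D.
Hypothesis hL : forall d, snz d -> sdvd d x0 -> exists2 l, l \in L & sassoc d l.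

Definition meas y := count (fun l => pb (sdvd l y)) L.

Lemma meas_lt y b : snz y -> sdvd y x0 -> sdvd b y -> ~ sdvd y b -> (meas b < meas y)%N.
Proof.
move=> hy hyx hby nyb; apply: count_lt.
  by move=> l /pbP hl; apply/pbP; exact: sdvd_trans hby.
have [l lin [_ [_ [hyl hly]]]] := hL hy hyx.
apply/hasP; exists l => //=; apply/andP; split; last exact/pbP.
by apply/negP => /pbP hlb; apply: nyb; exact: sdvd_trans hlb.
Qed.

Lemma atomic_aux n : forall y, (meas y < n)%N -> snz y -> sdvd y x0 -> ~ sunit y ->
  exists s, List.Forall satom s /\ y = \prod_(a <- s) a.
Proof.
elim: n => // n IH y hm hy hyx nuy.
case: (classic (satom y)) => [ay|nay].
  by exists [:: y]; split; [constructor | rewrite big_seq1].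
have : ~ (forall b c, snz b -> snz c -> y = b * c -> sunit b \/ sunit c).
  by move=> h; apply: nay.
move=> /not_all_ex_not [b /not_all_ex_not [c h]].
have [hb h1] := imply_to_and _ _ h.
have [hc h2] := imply_to_and _ _ h1.
have [ybc nbc] := imply_to_and _ _ h2.
have nub : ~ sunit b by move=> u; apply: nbc; left.
have nuc : ~ sunit c by move=> u; apply: nbc; right.
have y0 : y <> 0 by case: hy.
have hby : sdvd b y by exists c.
have hcy : sdvd c y by exists b; rewrite mulrC.
have nyb : ~ sdvd y b.
  move=> [e [he hbe]]; apply: nuc; apply: (cancel_unit y0 he hc).
  by rewrite mulrA -hbe.
have nyc : ~ sdvd y c.
  move=> [e [he hce]]; apply: nub; apply: (cancel_unit y0 he hb).
  by rewrite mulrA -hce mulrC.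
have [sb [hsb eb]] := IH b (leq_trans (meas_lt hy hyx hby nyb) (hm : (meas y < n.+1)%N)) hb (sdvd_trans hby hyx) nub.
have [sc [hsc ec]] := IH c (leq_trans (meas_lt hy hyx hcy nyc) (hm : (meas y < n.+1)%N)) hc (sdvd_trans hcy hyx) nuc.
exists (sb ++ sc); split; first by apply/List.Forall_app.
by rewrite big_cat /= -eb -ec.
Qed.

Lemma len_aux s : forall y, snz y -> sdvd y x0 -> List.Forall satom s ->
  \prod_(a <- s) a = y -> (size s <= meas y)%N.
Proof.
elim: s => // a s IH y hy hyx hs; inversion hs as [|a' s' ha hs' E]; subst.
rewrite big_cons => ey.
have hp : snz (\prod_(b <- s) b) by apply: snz_prod; apply: List.Forall_impl hs'; exact: atom_snz.
have hpy : sdvd (\prod_(b <- s) b) y by rewrite -ey; apply: sdvd_mull; exact: atom_snz.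
have nyp : ~ sdvd y (\prod_(b <- s) b).
  move=> [e [he hpe]]; case: ha => [ha [nua _]]; apply: nua.
  apply: (cancel_unit (y := \prod_(b <- s) b) (e := e)) => //; first by case: hp.
  by rewrite {1}hpe -ey mulrAC mulrC (mulrC e).
have := IH _ hp (sdvd_trans hpy hyx) hs' erefl.
have := meas_lt hy hyx hpy nyp => /=; lia.
Qed.
End Fix.

Fixpoint allseqs (L : seq D) (n : nat) : seq (seq D) :=
  if n is n'.+1 then [::] :: [seq a :: u | a <- L, u <- allseqs L n'] else [:: [::]].

Lemma allseqsP L s : forall n, List.Forall (fun a => exists2 l, l \in L & sassoc a l) s ->
  (size s <= n)%N -> exists t, t \in allseqs L n /\ List.Forall2 sassoc s t.
Proof.
elim: s => [|a s IH] n hs hn.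
  by exists [::]; split; [case: n {hn} => [|n]; exact: mem_head | constructor].
inversion hs as [|a' s' [l lin hal] hs' E]; subst.
case: n hn => // n hn.
have [t [tin ht]] := IH n hs' hn.
exists (l :: t); split; last by constructor.
rewrite /= in_cons; apply/orP; right; exact: (allpairs_f (fun a u => a :: u) lin tin).
Qed.

Lemma divfin_FFS : divfin -> FFS S.
Proof.
move=> hd; split.
  move=> x hx nux; have [L hL] := hd x hx.
  apply: (atomic_aux hL (n := (meas L x).+1)) => //; exact: sdvd_refl.
move=> x hx; have [L hL] := hd x hx.
exists (allseqs L (meas L x)) => s [hs es].
have [t [tin ht]] : exists t, t \in allseqs L (meas L x) /\ List.Forall2 sassoc s t.
  apply: allseqsP; last by apply: (len_aux hL) => //; exact: sdvd_refl.
  have : List.Forall (fun a => sdvd a x) s.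
    rewrite -es; clear es; elim: hs => [|a s' ha hs' IH]; first by constructor.
    rewrite big_cons; constructor; first by apply: sdvd_mulr; apply: snz_prod; apply: List.Forall_impl hs'; exact: atom_snz.
    apply: List.Forall_impl IH => b hb; apply: sdvd_trans hb _; apply: sdvd_mull; exact: atom_snz.
  move=> hdv; clear es; elim: hs hdv => [|a s' ha _ IH] hdv; first by constructor.
  inversion hdv as [|a' s'' hda hdv' E]; subst.
  constructor; [apply: hL => //; exact: atom_snz | exact: IH].
exists t; split; first exact: mem_In.
by exists t; split=> //; apply: Permutation.Permutation_refl.
Qed.

End Gen.
Section FieldDiv.
Variable F : fieldType.

Lemma min_div (f : {poly F}) : (1 < size f)%N -> exists p, p %| f /\ (1 < size p)%N /\
  forall d, d %| f -> (1 < size d)%N -> (size p <= size d)%N.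
Proof.
move=> hf.
suff H : forall n (p : {poly F}), (size p <= n)%N -> p %| f -> (1 < size p)%N -> exists p, p %| f /\ (1 < size p)%N /\
  forall d, d %| f -> (1 < size d)%N -> (size p <= size d)%N by exact: (H _ f (leqnn _) (dvdpp f) hf).
elim=> [|n IH] p hp hpf hp1; first by move: hp; rewrite leqn0 => /eqP h; rewrite h in hp1.
case: (classic (exists d, d %| f /\ (1 < size d)%N /\ (size d < size p)%N)) => [[d [hd [hd1 hdp]]]|nd].
  by apply: (IH d) => //; rewrite -ltnS; exact: leq_trans hdp hp.
exists p; split=> //; split=> // d hd hd1; rewrite leqNgt; apply/negP => hdp; apply: nd.
by exists d.
Qed.

Lemma fin_divs (f : {poly F}) : f != 0 -> exists L : seq {poly F},
  forall g, g %| f -> exists2 l, l \in L & g %= l.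
Proof.
suff H : forall n (f : {poly F}), (size f <= n)%N -> f != 0 -> exists L : seq {poly F},
  forall g, g %| f -> exists2 l, l \in L & g %= l by exact: (H _ f (leqnn _)).
elim=> [|n IH] {}f hn f0.
  by move: hn; rewrite leqn0 size_poly_eq0 (negbTE f0).
case: (leqP (size f) 1) => hf1.
  exists [:: 1] => g hg; exists 1; first exact: mem_head.
  rewrite -size_poly_eq1 eqn_leq (leq_trans (dvdp_leq f0 hg) hf1) /=.
  rewrite lt0n size_poly_eq0; apply/negP => /eqP g0.
  by move: hg; rewrite g0 dvd0p (negbTE f0).
have [p [hpf [hp1 hmin]]] := min_div hf1.
have p0 : p != 0 by rewrite -size_poly_eq0 -lt0n; apply: ltnW.
set q := f %/ p.
have fq : f = q * p by rewrite divpK.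
have q0 : q != 0 by apply/eqP => q0; move: f0; rewrite fq q0 mul0r eqxx.
have hq : (size q <= n)%N.
  move: hn hp1; rewrite fq size_mul //; move: (size q) (size p) => a b; lia.
have [L hL] := IH q hq q0.
exists (L ++ map (fun l => l * p) L) => g hg.
set d := gcdp g p.
have d0 : d != 0 by rewrite gcdp_eq0 negb_and p0 orbT.
case: (eqVneq (size d) 1) => hd.
  have cop : coprimep g p by rewrite coprimep_def -/d hd.
  have : g %| q by rewrite -(Gauss_dvdpl _ cop) -fq.
  move=> /hL [l lin gl]; exists l => //; by rewrite mem_cat lin.
have hd1 : (1 < size d)%N.
  by move: hd d0; rewrite -size_poly_eq0; case: (size d) => [|[|k]].
have hdf : d %| f by apply: dvdp_trans (dvdp_gcdr g p) hpf.
have hdp : d %= p.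
  rewrite -dvdp_size_eqp ?dvdp_gcdr // eqn_leq (dvdp_leq p0 (dvdp_gcdr _ _)).
  exact: hmin.
have hpg : p %| g by rewrite -(eqp_dvdl _ hdp) dvdp_gcdl.
have eg : g = (g %/ p) * p by rewrite divpK.
have : g %/ p %| q by rewrite -(dvdp_mul2r _ _ p0) -eg -fq.
move=> /hL [l lin gl]; exists (l * p).
  by rewrite mem_cat; apply/orP; right; apply: map_f.
by rewrite eg eqp_mul2r.
Qed.

Lemma fin_monic_divs (f : {poly F}) : f != 0 -> exists M : seq {poly F},
  forall m, m \is monic -> m %| f -> m \in M.
Proof.
move=> /fin_divs [L hL]; exists (map (fun l => (lead_coef l)^-1 *: l) L) => m mm hm.
have [l lin ml] := hL m hm.
have l0 : l != 0 by apply/negP => /eqP l0; move: ml; rewrite l0 eqp0 (negbTE (monic_neq0 mm)).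
have lc0 : lead_coef l != 0 by rewrite lead_coef_eq0.
have mon : (lead_coef l)^-1 *: l \is monic by rewrite monicE lead_coefZ mulVf.
have -> : m = (lead_coef l)^-1 *: l.
  apply/eqP; rewrite -eqp_monic //; apply: eqp_trans ml _; rewrite eqp_sym eqp_scale //.
  by rewrite invr_eq0.
exact: map_f.
Qed.
End FieldDiv.

Lemma choose_reps (A B : eqType) (Q : A -> B -> Prop) (ks : seq A) :
  exists L : seq B, forall k, k \in ks -> (exists g, Q k g) -> exists2 g, g \in L & Q k g.
Proof.
elim: ks => [|k ks [L hL]]; first by exists [::].
case: (classic (exists g, Q k g)) => [[g0 hg0]|nq].
  exists (g0 :: L) => k'; rewrite in_cons => /orP [/eqP->|hk] hex.
    by exists g0; rewrite ?mem_head.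
  by have [g gin hg] := hL k' hk hex; exists g; rewrite ?in_cons ?gin ?orbT.
exists L => k'; rewrite in_cons => /orP [/eqP->|hk] hex; first by exfalso; apply: nq.
exact: hL.
Qed.

Section Poly.
Variables (R : idomainType) (S : R -> Prop).
Hypotheses (S0 : S 0) (S1 : S 1) (Sadd : forall a b, S a -> S b -> S (a + b))
  (Smul : forall a b, S a -> S b -> S (a * b)).

Local Notation P := (polyS S).
Local Notation T := (laurentS S).

Lemma S_sum (I : Type) (r : seq I) (F : I -> R) : (forall i, S (F i)) -> S (\sum_(i <- r) F i).
Proof. by move=> h; apply: big_ind => //; move=> i _; exact: h. Qed.

Lemma P1 : P 1.
Proof. by move=> i; rewrite coef1; case: (i == 0)%N; rewrite /= ?mulr1n ?mulr0n. Qed.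

Lemma PM p q : P p -> P q -> P (p * q).
Proof. by move=> hp hq i; rewrite coefM; apply: S_sum => j; exact: Smul. Qed.

Lemma PC c : S c -> P c%:P.
Proof. by move=> hc i; rewrite coefC; case: (i == 0)%N. Qed.

Lemma PXn p n : P p -> P (p * 'X^n).
Proof. by move=> hp i; rewrite coefMXn; case: ifP. Qed.

Lemma Xn_neq0 n : ('X^n : {poly R}) != 0.
Proof. exact: monic_neq0 (monicXn _ _). Qed.

Lemma strip q : q != 0 -> exists q0 j, q = q0 * 'X^j /\ q0`_0 != 0 /\ (P q -> P q0).
Proof.
suff H : forall n (q : {poly R}), (size q <= n)%N -> q != 0 ->
  exists q0 j, q = q0 * 'X^j /\ q0`_0 != 0 /\ (P q -> P q0) by exact: (H _ q (leqnn _)).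
elim=> [|n IH] {}q hn q0.
  by move: hn; rewrite leqn0 size_poly_eq0 (negbTE q0).
case: (eqVneq q`_0 0) => h0; last by exists q, 0%N; rewrite expr0 mulr1.
have eq : q = drop_poly 1 q * 'X.
  apply/polyP => i; rewrite coefMX coef_drop_poly; case: i => [|i] //=.
  by rewrite addn1.
have d0 : drop_poly 1 q != 0 by apply/eqP => d0; move: q0; rewrite eq d0 mul0r eqxx.
have hs : (size (drop_poly 1 q) <= n)%N.
  by rewrite size_drop_poly; move: hn; move: (size q) => a; lia.
have [q1 [j [e [h1 h2]]]] := IH _ hs d0.
exists q1, j.+1; split; first by rewrite {1}eq e -mulrA -exprSr.
split=> // hq; apply: h2 => i; rewrite coef_drop_poly; exact: hq.
Qed.

Lemma strip_uniq (a b : {poly R}) i j : a * 'X^i = b * 'X^j -> a`_0 != 0 -> b`_0 != 0 -> i = j /\ a = b.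
Proof.
move=> e a0 b0.
have ij : i = j.
  case: (ltngtP i j) => [hij|hij|->] //.
    have := congr1 (fun p : {poly R} => p`_i) e; rewrite /= !coefMXn ltnn hij subnn => h.
    by rewrite h eqxx in a0.
  have := congr1 (fun p : {poly R} => p`_j) e; rewrite /= !coefMXn ltnn hij subnn => h.
  by rewrite -h eqxx in b0.
subst j; split => //; exact: (mulIf (Xn_neq0 i) e).
Qed.

Local Notation mp := (map_poly (@tofrac R)).

Lemma tofrac_inj (D : idomainType) : injective (@tofrac D).
Proof. by move=> x y /eqP; rewrite tofrac_eq => /eqP. Qed.

Lemma mp_inj : injective mp.
Proof. apply: map_inj_poly; [exact: tofrac_inj | exact: rmorph0]. Qed.

Definition nrm (g : {poly R}) : {poly {fraction R}} := (tofrac (lead_coef g))^-1 *: mp g.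

Lemma nrm_eq g g' u : g != 0 -> g' != 0 -> lead_coef g' = lead_coef g * u -> nrm g = nrm g' ->
  g' = g * u%:P.
Proof.
move=> g0 g'0 hl hn; apply: mp_inj.
rewrite rmorphM /= map_polyC /= mulrC mul_polyC.
have -> : mp g' = tofrac (lead_coef g') *: nrm g'.
  by rewrite /nrm scalerA mulfV ?scale1r // tofrac_eq0 lead_coef_eq0.
rewrite -hn hl /nrm scalerA rmorphM /= mulrAC mulfV ?mul1r //.
by rewrite tofrac_eq0 lead_coef_eq0.
Qed.

Lemma snzP_lc g : snz P g -> snz S (lead_coef g).
Proof.
move=> [hg g0]; split; first exact: hg.
by apply/eqP; rewrite lead_coef_eq0; apply/eqP.
Qed.

Lemma snzPC c : snz S c -> snz P c%:P.
Proof. move=> [hc c0]; split; first exact: PC. by apply/eqP; rewrite polyC_eq0; apply/eqP. Qed.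

Lemma poly_up : divfin S -> divfin P.
Proof.
move=> hd f hf.
have lf := snzP_lc hf.
have [LC hLC] := hd _ lf.
have mf0 : mp f != 0.
  by rewrite -lead_coef_eq0 lead_coef_map_inj ?tofrac_eq0 ?lead_coef_eq0; [apply/eqP; case: hf| exact: tofrac_inj | exact: rmorph0].
have [M hM] := fin_monic_divs mf0.
have [L' hL'] := choose_reps (fun k g => snz P g /\ Defs.sdvd P g f /\
   sassoc S (lead_coef g) k.1 /\ nrm g = k.2) [seq (c, m) | c <- LC, m <- M].
exists L' => g hg [h [hh fgh]].
have lgh : lead_coef f = lead_coef g * lead_coef h by rewrite fgh lead_coefM.
have lg := snzP_lc hg.
have lh := snzP_lc hh.
have [c cin hc] := hLC _ lg (ex_intro _ _ (conj lh lgh)).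
have g0 : g != 0 by apply/eqP; case: hg.
have lg0 : tofrac (lead_coef g) != 0 by rewrite tofrac_eq0 lead_coef_eq0.
have mon : nrm g \is monic.
  rewrite monicE /nrm lead_coefZ lead_coef_map_inj ?mulVf //; exact: tofrac_inj.
have dv : nrm g %| mp f.
  rewrite /nrm dvdpZl ?invr_eq0 // fgh rmorphM; exact: dvdp_mulr (dvdpp _).
have kin : (c, nrm g) \in [seq (c, m) | c <- LC, m <- M] := allpairs_f pair cin (hM _ mon dv).
have [g' g'in [hg' [hg'f [hc' en]]]] :=
  hL' _ kin (ex_intro _ g (conj hg (conj (ex_intro _ h (conj hh fgh)) (conj hc erefl)))).
exists g' => //.
have g'0 : g' != 0 by apply/eqP; case: hg'.
have [_ [_ [[u [hu e1]] [v [hv e2]]]]] := sassoc_trans Smul hc (sassoc_sym hc').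
split=> //; split=> //; split.
  exists u%:P; split; first exact: snzPC.
  by apply: nrm_eq => //; rewrite en.
exists v%:P; split; first exact: snzPC.
by apply: nrm_eq => //; rewrite en.
Qed.

Lemma poly_const_dvd a b : snz S a -> snz S b -> Defs.sdvd P a%:P b%:P -> Defs.sdvd S a b.
Proof.
move=> ha [hb b0] [w [[hw w0] e]].
have h0 : b = a * w`_0 by have := congr1 (fun p : {poly R} => p`_0) e; rewrite /= coefCM coefC eqxx.
exists w`_0; split=> //; split; first exact: hw.
by move=> w00; apply: b0; rewrite h0 w00 mulr0.
Qed.

Lemma poly_down : divfin P -> divfin S.
Proof.
move=> hd c hc.
have [LP hLP] := hd _ (snzPC hc).
have [Le hLe] := choose_reps (fun l e => snz S e /\ sassoc P e%:P l) LP.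
exists Le => d hd' [e [he ce]].
have : Defs.sdvd P d%:P c%:P by exists e%:P; split; [exact: snzPC | by rewrite ce polyCM].
move=> /(hLP _ (snzPC hd')) [l lin hl].
have [e' e'in [he' hl']] := hLe _ lin (ex_intro _ d (conj hd' hl)).
have [_ [_ [h1 h2]]] := sassoc_trans (PM) hl (sassoc_sym hl').
by exists e' => //; do 3!split=> //; exact: poly_const_dvd.
Qed.



Lemma fe1 (K : fieldType) (x y z u v : K) : u != 0 -> v != 0 -> x / u * (y / v) * z * (u * v) = x * y * z.
Proof. by move=> hu hv; field; rewrite hu hv. Qed.
Lemma fe2 (K : fieldType) (x y b m : K) : b != 0 -> m != 0 -> x * y = x * b / m * (y * m / b).
Proof. by move=> hu hv; field; rewrite hu hv. Qed.
Lemma fe3 (K : fieldType) (x y b m : K) : x * y * b / m = x * (y * b / m).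
Proof. by rewrite !mulrA. Qed.

Local Notation iota := (@tofrac {poly R}).
Local Notation tX n := (iota ('X^n)).

Lemma tX_neq0 n : tX n != 0.
Proof. by rewrite tofrac_eq0 Xn_neq0. Qed.

Lemma T1 : T 1.
Proof. by exists 1, 0%N; split; [exact: P1 | rewrite expr0 rmorph1 divr1]. Qed.

Lemma TM a b : T a -> T b -> T (a * b).
Proof.
move=> [p [n [hp ->]]] [q [m [hq ->]]]; exists (p * q), (n + m)%N; split; first exact: PM.
by rewrite exprD !rmorphM /= invfM mulrACA.
Qed.

Lemma TC p : P p -> T (iota p).
Proof. by move=> hp; exists p, 0%N; split=> //; rewrite expr0 rmorph1 divr1. Qed.

Lemma snzTC p : snz P p -> snz T (iota p).
Proof. move=> [hp p0]; split; first exact: TC. by apply/eqP; rewrite tofrac_eq0; apply/eqP. Qed.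

Lemma laurent_const_dvd a b : snz S a -> snz S b -> Defs.sdvd T (iota a%:P) (iota b%:P) -> Defs.sdvd S a b.
Proof.
move=> ha [hb b0] [w [[[s [k [hs ew]]] w0] e]].
have s0 : s != 0 by apply/eqP => s0; apply: w0; rewrite ew s0 rmorph0 mul0r.
have e2 : b%:P * 'X^k = a%:P * s.
  apply: tofrac_inj; rewrite !rmorphM /= e ew.
  by rewrite -mulrA divfK // tX_neq0.
have [s1 [j [es [s10 hP]]]] := strip s0.
rewrite es mulrA in e2.
have b0' : (b%:P)`_0 != 0 by rewrite coefC eqxx; apply/eqP.
have as0 : (a%:P * s1)`_0 != 0 by rewrite coefCM mulf_neq0 //; apply/eqP; case: ha.
have [_ e3] := strip_uniq e2 b0' as0.
exists s1`_0; split.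
  by split; [exact: (hP hs) | apply/eqP].
by have := congr1 (fun p : {poly R} => p`_0) e3; rewrite /= coefC eqxx coefCM.
Qed.

Lemma laurent_down : divfin T -> divfin S.
Proof.
move=> hd c hc.
have [LT hLT] := hd _ (snzTC (snzPC hc)).
have [Le hLe] := choose_reps (fun l e => snz S e /\ sassoc T (iota e%:P) l) LT.
exists Le => d hd' [e [he ce]].
have : Defs.sdvd T (iota d%:P) (iota c%:P).
  by exists (iota e%:P); split; [exact: snzTC (snzPC he) | by rewrite ce polyCM rmorphM].
move=> /(hLT _ (snzTC (snzPC hd'))) [l lin hl].
have [e' e'in [he' hl']] := hLe _ lin (ex_intro _ d (conj hd' hl)).
have [_ [_ [h1 h2]]] := sassoc_trans TM hl (sassoc_sym hl').
by exists e' => //; do 3!split=> //; exact: laurent_const_dvd.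
Qed.

Lemma nzu (w : {poly R}) j b : snz P w -> snz T (iota (w * 'X^j) / tX b).
Proof.
move=> [hw w0]; have wX : iota (w * 'X^j) != 0.
  rewrite tofrac_eq0; apply: mulf_neq0; last exact: Xn_neq0.
  exact/eqP.
split.
  exists (w * 'X^j), b; split; first exact: PXn.
  reflexivity.
have hb : (tX b)^-1 != 0 by rewrite invr_eq0 tX_neq0.
have := mulf_neq0 wX hb.
by move/eqP.
Qed.

Lemma laurent_up : divfin P -> divfin T.
Proof.
move=> hd f [[p [n [hp ef]]] f0].
have p0 : p != 0 by apply/eqP => p0; apply: f0; rewrite ef p0 rmorph0 mul0r.
have [p1 [a [ep [p10 hP1]]]] := strip p0.
have p1nz : p1 != 0 by apply/eqP => h; move: p10; rewrite h coef0 eqxx.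
have [LP hLP] := hd p1 (conj (hP1 hp) (fun h => (negP p1nz) (introT eqP h))).
exists (map (fun l => iota l) LP) => g [[q [m [hq eg]]] g0] [h [[[r [k [hr eh]]] h0] efg]].
have q0 : q != 0 by apply/eqP => q0; apply: g0; rewrite eg q0 rmorph0 mul0r.
have r0 : r != 0 by apply/eqP => r0; apply: h0; rewrite eh r0 rmorph0 mul0r.
have [q1 [b [eqq [q10 hQ1]]]] := strip q0.
have [r1 [c [er [r10 hR1]]]] := strip r0.
have E1 : p * ('X^m * 'X^k) = q * r * 'X^n.
  apply: tofrac_inj; rewrite !rmorphM /=.
  rewrite -[iota p](divfK (tX_neq0 n)) -ef efg eg eh.
  exact: fe1 (tX_neq0 m) (tX_neq0 k).
have E2 : p1 * 'X^(a + (m + k)) = (q1 * r1) * 'X^(b + c + n).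
  rewrite !exprD; transitivity (p * ('X^m * 'X^k)); first by rewrite ep mulrA.
  by rewrite E1 eqq er -!mulrA; congr (_ * _); rewrite mulrCA.
have qr0 : (q1 * r1)`_0 != 0 by rewrite coef0M mulf_neq0.
have [_ E3] := strip_uniq E2 p10 qr0.
have hq1 : snz P q1 by split; [exact: hQ1 | by apply/eqP; apply/negP => /eqP h1; move: q10; rewrite h1 coef0 eqxx].
have hr1 : snz P r1 by split; [exact: hR1 | by apply/eqP; apply/negP => /eqP h1; move: r10; rewrite h1 coef0 eqxx].
have [l lin hl] := hLP q1 hq1 (ex_intro _ r1 (conj hr1 E3)).
case: hl => [_ [hl' [[u [hu e1]] [v [hv e2]]]]].
exists (iota l); first exact: map_f.
have hgT : snz T g.
  split; last exact: g0.
  by exists q, m; split.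
split; first exact: hgT.
split; first exact: (snzTC hl').
split.
  exists (iota (u * 'X^m) / tX b); split; first exact: nzu.
  rewrite eg eqq e1 !rmorphM /=.
  exact: fe2 (tX_neq0 b) (tX_neq0 m).
exists (iota (v * 'X^b) / tX m); split; first exact: nzu.
rewrite eg eqq e2 !rmorphM /=.
exact: fe3.
Qed.

End Poly.

Theorem theorem4p4 (R : idomainType) (S : R -> Prop) (hS : semidomain S) :
  (FFS S <-> FFS (polyS S)) /\ (FFS S <-> FFS (laurentS S)).
Proof.
case: hS => [S0 [S1 [Sadd Smul]]].
have P1' := P1 S0 S1.
have PM' := PM S0 Sadd Smul.
have T1' := T1 S0 S1.
have TM' := TM S0 Sadd Smul.
split; split.
- move=> /(FFS_divfin S1 Smul) h; apply: (divfin_FFS P1' PM').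
  exact: poly_up.
- move=> /(FFS_divfin P1' PM') h; apply: (divfin_FFS S1 Smul).
  exact: poly_down.
- move=> /(FFS_divfin S1 Smul) h; apply: (divfin_FFS T1' TM').
  by apply: laurent_up => //; apply: poly_up.
- move=> /(FFS_divfin T1' TM') h; apply: (divfin_FFS S1 Smul).
  exact: laurent_down.
Qed.
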